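(* Let $G$ be a group and $H$ a subnormal subgroup of $G$. Then for every subgroup $K \leqslant G$ of finite index, $|HK:K|$ divides $|G:K|$.
   Context: For subgroups $H,K$ of a group $G$, $|HK:K|$ denotes the number of cosets of $K$ that intersect $H$ (equivalently $|H : H \cap K|$). $H$ is subnormal in $G$ if there is a finite chain $H = H_0 \lhd H_1 \lhd \dots \lhd H_r = G$. *)

(* Defs.v *)
(* abstract (possibly infinite) groups via mathcomp's
   monoid.v [groupType]; subgroups are Prop-valued predicates (membership in a
   subgroup of an infinite group need not be decidable). *)
From HB Require Import structures.
From mathcomp Require Import all_boot.
From mathcomp Require Import monoid.
Set Implicit Arguments. Unset Strict Implicit. Unset Printing Implicit Defensive.
Local Open Scope group_scope.

Section Defs.
Variable G : groupType.

Definition subgroup (H : G -> Prop) : Prop :=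
  H 1 /\ (forall x y, H x -> H y -> H (x * y)) /\ (forall x, H x -> H x^-1).

Definition normal_in (H L : G -> Prop) : Prop :=
  subgroup H /\ subgroup L /\ (forall x, H x -> L x) /\
  (forall x y, H x -> L y -> H (y^-1 * x * y)).

Inductive subnormal : (G -> Prop) -> Prop :=
| subnormal_top : forall H, (forall x, H x) -> subnormal H
| subnormal_step : forall H L, normal_in H L -> subnormal L -> subnormal H.

Definition has_index (K : G -> Prop) (n : nat) : Prop :=
  exists s : seq G, size s = n /\
    (forall i j, i < n -> j < n -> i <> j -> ~ K ((nth 1 s i)^-1 * nth 1 s j)) /\
    (forall g, exists2 i, i < n & K ((nth 1 s i)^-1 * g)).

(* |HK : K| = m: exactly m left cosets of K intersect H, i.e. there are m
   elements h_i of H in pairwise distinct cosets h_i K, and every element of H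
   lies in one of them. *)
Definition cosets_meeting (H K : G -> Prop) (m : nat) : Prop :=
  exists s : seq G, size s = m /\
    (forall i, i < m -> H (nth 1 s i)) /\
    (forall i j, i < m -> j < m -> i <> j -> ~ K ((nth 1 s i)^-1 * nth 1 s j)) /\
    (forall h, H h -> exists2 i, i < m & K ((nth 1 s i)^-1 * h)).

End Defs.

(* Main.v *)
Require Import Defs.
From HB Require Import structures.
From mathcomp Require Import all_boot.
From mathcomp Require Import monoid.
From Stdlib Require Import ClassicalEpsilon ClassicalDescription.
Set Implicit Arguments. Unset Strict Implicit. Unset Printing Implicit Defensive.

Definition pb (P : Prop) : bool := if excluded_middle_informative P then true else false.
Lemma pbP (P : Prop) : reflect P (pb P).
Proof. rewrite /pb; case: excluded_middle_informative => h; constructor => //. Qed.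

Section Main.
Local Open Scope group_scope.
Variables (G : groupType) (K : G -> Prop) (n : nat) (s : seq G).
Hypothesis sK : subgroup K.
Hypothesis sdist : forall i j, i < n -> j < n -> i <> j -> ~ K ((nth 1 s i)^-1 * nth 1 s j).
Hypothesis scov : forall g, exists2 i, i < n & K ((nth 1 s i)^-1 * g).

Definition r (i : 'I_n) := nth 1 s i.

Lemma K1 : K 1. Proof. by case: sK. Qed.
Lemma KM x y : K x -> K y -> K (x * y). Proof. by case: sK => _ [hM _]; apply: hM. Qed.
Lemma KV x : K x -> K x^-1. Proof. by case: sK => _ [_ hV]; apply: hV. Qed.

Lemma cex g : exists i : 'I_n, K ((r i)^-1 * g).
Proof. case: (scov g) => i ilt Ki; by exists (Ordinal ilt). Qed.

Definition c g : 'I_n := proj1_sig (constructive_indefinite_description _ (cex g)).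
Lemma cP g : K ((r (c g))^-1 * g).
Proof. exact: (proj2_sig (constructive_indefinite_description _ (cex g))). Qed.

Lemma c_uniq g i : K ((r i)^-1 * g) -> c g = i.
Proof.
move=> Ki; case: (eqVneq (c g) i) => // ne; exfalso.
apply: (sdist (ltn_ord (c g)) (ltn_ord i)).
  by move=> e; move: ne; rewrite -(inj_eq val_inj) /= e eqxx.
have := KM (cP g) (KV Ki).
by rewrite invgM invgK mulgA mulgK.
Qed.

Lemma c_eq g g' : c g = c g' <-> K (g^-1 * g').
Proof.
split.
  move=> e; have := KM (KV (cP g)) (cP g'); rewrite e.
  by rewrite invgM invgK mulgA mulgK.
move=> Kg; symmetry; apply: c_uniq.
by have := KM (cP g) Kg; rewrite mulgA mulgK.
Qed.

Lemma c_r i : c (r i) = i.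
Proof. by apply: c_uniq; rewrite mulVg; exact: K1. Qed.

Lemma c_mul x g g' : c g = c g' -> c (x * g) = c (x * g').
Proof. by move/c_eq=> Kg; apply/c_eq; rewrite invgM -mulgA mulKg. Qed.

Definition O (X : G -> Prop) : {set 'I_n} := [set i | pb (exists x, X x /\ c x = i)].

Lemma inO X i : reflect (exists x, X x /\ c x = i) (i \in O X).
Proof. rewrite inE; exact: pbP. Qed.

Lemma cosets_card X m : cosets_meeting X K m -> m = #|O X|.
Proof.
move=> [t [st [tX [tdist tcov]]]].
pose f := fun j : 'I_m => c (nth 1 t j).
have finj : injective f.
  move=> j k /c_eq Kjk; apply: val_inj; apply/eqP; apply/negPn/negP => ne.
  exact: (tdist _ _ (ltn_ord j) (ltn_ord k) (elimN eqP ne) Kjk).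
have -> : O X = [set f j | j in 'I_m].
  apply/setP=> i; apply/inO/imsetP.
    move=> [x [Xx <-]]; case: (tcov x Xx) => j jm Kj.
    by exists (Ordinal jm) => //; apply/esym/c_eq.
  move=> [j _ ->]; exists (nth 1 t j); split => //; exact: tX (ltn_ord j).
by rewrite card_imset // card_ord.
Qed.

Definition rep X i := epsilon (inhabits (1:G)) (fun x => X x /\ c x = i).
Lemma repP X i : i \in O X -> X (rep X i) /\ c (rep X i) = i.
Proof. by move/inO; apply: epsilon_spec. Qed.

Lemma cosets_exist X : cosets_meeting X K #|O X|.
Proof.
pose e := enum (O X).
have nthE j : j < #|O X| -> nth 1 (map (rep X) e) j = rep X (nth (c 1) e j).
  by move=> jl; rewrite (nth_map (c 1)) // -cardE.
have inOj j : j < #|O X| -> nth (c 1) e j \in O X.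
  by move=> jl; rewrite -mem_enum; apply: mem_nth; rewrite -cardE.
exists (map (rep X) e); split; first by rewrite size_map -cardE.
split; first by move=> i il; rewrite nthE //; case: (repP (inOj _ il)).
split.
  move=> i j il jl ne; rewrite !nthE // => /c_eq.
  case: (repP (inOj _ il)) => _ ->; case: (repP (inOj _ jl)) => _ ->.
  move/eqP; rewrite nth_uniq ?enum_uniq -?cardE // => /eqP; exact: ne.
move=> h Xh.
have hO : c h \in O X by apply/inO; exists h.
have jl : index (c h) e < #|O X| by rewrite cardE index_mem mem_enum.
exists (index (c h) e) => //; rewrite nthE //; apply/c_eq.
by case: (repP (inOj _ jl)) => _ ->; rewrite nth_index // mem_enum.
Qed.

Lemma O_top X : (forall x, X x) -> #|O X| = n.
Proof.
move=> XT; rewrite -[n in RHS]card_ord; apply: eq_card => i.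
by apply/inO; exists (r i); rewrite c_r.
Qed.

Lemma O_normal Hs L : normal_in Hs L -> (#|O Hs| %| #|O L|)%N.
Proof.
move=> [sH [sL [HL nHL]]]; case: sH => H1 [HM HV]; case: sL => L1 [LM LV].
pose T x := [set i | pb (exists h, Hs h /\ c (h * x) = i)].
have inT x i : reflect (exists h, Hs h /\ c (h * x) = i) (i \in T x).
  by rewrite inE; exact: pbP.
pose P := [set A : {set 'I_n} | pb (exists x, L x /\ A = T x)].
have inP A : reflect (exists x, L x /\ A = T x) (A \in P).
  by rewrite inE; exact: pbP.
have Tsub x y h1 h2 : Hs h1 -> Hs h2 -> c (h1 * x) = c (h2 * y) -> T x \subset T y.
  move=> H1h H2h /c_eq Kxy; apply/subsetP=> i /inT [h [Hh <-]]; apply/inT.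
  exists (h * h1^-1 * h2); split; first by idtac; apply: (HM) => //; apply: (HM) => //; apply: (HV).
  apply/esym/c_eq.
  suff -> : (h * x)^-1 * (h * h1^-1 * h2 * y) = (h1 * x)^-1 * (h2 * y) by [].
  by rewrite !invgM !mulgA mulgVK.
have Tcard x : L x -> #|T x| = #|O Hs|.
  move=> Lx; pose f := fun i => c (x * r i).
  have finj : injective f.
    move=> i j /c_eq; rewrite invgM -mulgA mulKg => Kij.
    by rewrite -(c_r i) -(c_r j); apply/c_eq.
  have -> : T x = f @: O Hs.
    apply/setP => i; apply/inT/imsetP.
      move=> [h [Hh <-]]; exists (c (x^-1 * h * x)).
        by apply/inO; exists (x^-1 * h * x); split => //; apply: (nHL).
      by rewrite /f (c_mul x (c_r (c _))) !mulgA mulgV mul1g.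
    move=> [j /inO [h' [Hh' <-]] ->]; exists (x * h' * x^-1); split.
      by have := nHL h' x^-1 Hh' (LV x Lx); rewrite invgK.
    by rewrite /f (c_mul x (c_r (c _))) mulgVK.
  by rewrite card_imset.
have coverE : cover P = O L.
  apply/setP => i; apply/bigcupP/inO.
    move=> [A /inP [x [Lx ->]] /inT [h [Hh <-]]]; exists (h * x); split => //.
    by apply: (LM) => //; apply: (HL).
  move=> [x [Lx <-]]; exists (T x); first by apply/inP; exists x.
  by apply/inT; exists 1; split => //; rewrite mul1g.
have triv : trivIset P.
  apply/trivIsetP => A B /inP [x [Lx ->]] /inP [y [Ly ->]] ne.
  rewrite -setI_eq0; apply/eqP/setP=> i; rewrite inE in_set0.
  apply/negP => /andP [/inT [h1 [Hh1 e1]] /inT [h2 [Hh2 e2]]].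
  have e : c (h1 * x) = c (h2 * y) by rewrite e1 e2.
  by move: ne; rewrite eqEsubset (Tsub x y h1 h2) // (Tsub y x h2 h1).
rewrite -coverE -(eqP triv) (eq_bigr (fun _ => #|O Hs|)).
  by rewrite sum_nat_const; apply: dvdn_mull.
by move=> A /inP [x [Lx ->]]; exact: Tcard.
Qed.

Lemma O_subnormal X : subnormal X -> (#|O X| %| n)%N.
Proof.
elim=> [X' XT | X' L nXL _ IH]; first by rewrite O_top.
exact: dvdn_trans (O_normal nXL) IH.
Qed.
End Main.

Theorem proposition1p3 (G : groupType) (H K : G -> Prop) (n : nat) :
  subgroup H -> subnormal H -> subgroup K -> has_index K n ->
  (exists m, cosets_meeting H K m) /\
  (forall m, cosets_meeting H K m -> (m %| n)%N).
Proof.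
move=> sH snH sK [s [sz [sdist scov]]].
split; first by eexists; apply: cosets_exist sK sdist scov H.
move=> m cm; rewrite (cosets_card sK sdist scov cm); exact: O_subnormal.
Qed.
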